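(* Let $\varphi: S\to R$ be a ring morphism, $W\in S$, $(X,d)$ a finite rank matrix factorisation of $W$ over $R$ with fixed homogeneous $R$-basis $\{\xi_i\}_{i\in I}$, and $\mathbf{t}=\{t_1,\ldots,t_n\}$ a quasi-regular sequence in $R$ with each $t_j\cdot 1_X$ null-homotopic. Suppose given $S$-linear maps $\sigma: R/\mathbf{t}R\to K(\mathbf{t})$ (a morphism of complexes) and $h: K(\mathbf{t})\to K(\mathbf{t})$ of degree $-1$ such that $\pi\sigma = 1$, $\sigma\pi = 1 + \delta h + h\delta$, $h^2=0$, $h\sigma=0$ and $\pi h = 0$. Then the morphism $\pi: X\otimes_R K(\mathbf{t}) \to X/\mathbf{t}X$ is a homotopy equivalence of linear factorisations of $W$ over $S$, and \[ \sigma_\infty = \sum_{m\ge0}(hd)^m\sigma, \qquad h_\infty = \sum_{m\ge 0}(hd)^m h \] give a deformation retract datum: $\sigma_\infty: (X/\mathbf{t}X, d)\to (X\otimes K(\mathbf{t}), d+\delta)$ is a morphism of linear factorisations of $W$ over $S$, $\pi\sigma_\infty = 1$, and $\sigma_\infty\pi = 1 + (d+\delta)h_\infty + h_\infty(d+\delta)$.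
   Context: All rings commutative. A linear factorisation of $W$ over $R$: $\mathbb{Z}/2$-graded $R$-module with odd $R$-linear $d$, $d^2 = W\cdot 1$; finite rank matrix factorisation: components free of finite rank. The Koszul complex $K(\mathbf{t})$ is the exterior algebra $\wedge F$ on the free $R$-module $F$ with basis symbols $\mathrm{d}t_1,\ldots,\mathrm{d}t_n$, graded with $|\mathrm{d}t_i|=-1$, with differential $\delta$ given by contraction with $\sum_i t_i(\mathrm{d}t_i)^*$. $\pi: K(\mathbf{t})\to R/\mathbf{t}R$ is the augmentation (projection to degree $0$ followed by the quotient). $X\otimes_R K(\mathbf{t})$ denotes the tensor product with the $\mathbb{Z}/2$-folding of $K(\mathbf{t})$ (even degrees in degree $0$, odd in degree $1$), a linear factorisation of $W$ over $R$ with differential $d\otimes 1 + 1\otimes\delta$, written $d+\delta$; $X/\mathbf{t}X = X\otimes_RR/\mathbf{t}R$ with differential $d$. The $S$-linear maps $h,\sigma$ are extended to $X\otimes K(\mathbf{t})$, resp. $X\otimes R/\mathbf{t}R$, using the basis: $h(\xi_i\otimes m) = (-1)^{|\xi_i|}\xi_i\otimes h(m)$ and $\sigma(\xi_i\otimes p) = \xi_i\otimes\sigma(p)$; $\pi$ denotes $1\otimes\pi$ and $d$ denotes $d\otimes 1$. *)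

(* Defs.v *)
From HB Require Import structures.
From mathcomp Require Import all_boot all_order all_algebra.
Set Implicit Arguments. Unset Strict Implicit. Unset Printing Implicit Defensive.
Import Order.TTheory GRing.Theory Num.Theory.
Local Open Scope ring_scope.

(* K(t) = /\ F with basis e_A = dt_{a1}/\.../\dt_{ak}
   (A = {a1<...<ak} a subset of 'I_n), so an element of K(t) is a finite
   function {set 'I_n} -> R.  Koszul degree of e_A is -#|A|.
   X is free on the homogeneous basis (xi_i)_{i : I}, xi_i of parity p i.
   X (x) K(t) = sum_i xi_i (x) K(t): an element is a family (x_i)_i of
   elements of K(t), meaning sum_i xi_i (x) x_i.
   X / tX = sum_i xi_i (x) R/tR: a family (y_i)_i of elements of Q = R/tR. *)

Definition KT (R : comPzRingType) (n : nat) := {ffun {set 'I_n} -> R}.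
Definition XKT (R : comPzRingType) (I : finType) (n : nat) := {ffun I -> KT R n}.
Definition XQT (Q : comPzRingType) (I : finType) := {ffun I -> Q}.

Definition slin (S : comPzRingType) (U V : zmodType)
  (aU : S -> U -> U) (aV : S -> V -> V) (f : U -> V) :=
  forall s x y, f (aU s x + y) = aV s (f x) + f y.

Section Defs.
Variables (S R Q : comPzRingType) (phi : {rmorphism S -> R})
  (q : {rmorphism R -> Q}) (n : nat) (t : 'I_n -> R).
Variables (I : finType) (p : I -> bool) (D : I -> I -> R).

Definition is_quotient_by_t :=
  (forall y : Q, exists x : R, q x = y) /\
  (forall x : R, q x = 0 <-> exists c : 'I_n -> R, x = \sum_(j < n) c j * t j).

(* Koszul differential: contraction with sum_i t_i (dt_i)^*,
   delta(e_A) = sum_{a in A} (-1)^{#{b in A | b < a}} t_a e_{A \ a}. *)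
Definition kdelta (f : KT R n) : KT R n :=
  [ffun B : {set 'I_n} =>
     \sum_(a < n | a \notin B)
        (-1) ^+ #|[set b in B | (b < a)%N]| * t a * f (a |: B)].

Definition deg_supp (k : nat) (f : KT R n) := forall A : {set 'I_n}, #|A| != k -> f A = 0.

Definition quasi_regular :=
  forall k, (0 < k)%N -> forall f : KT R n, deg_supp k f -> kdelta f = 0 ->
    exists g : KT R n, kdelta g = f.

Definition piK (f : KT R n) : Q := q (f set0).

Definition scaleK (s : S) (f : KT R n) : KT R n := [ffun A => phi s * f A].
Definition scaleQ (s : S) (y : Q) : Q := q (phi s) * y.
Definition scaleXK (s : S) (x : XKT R I n) : XKT R I n :=
  [ffun i => scaleK s (x i)].
Definition scaleXQ (s : S) (y : XQT Q I) : XQT Q I :=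
  [ffun i => scaleQ s (y i)].

(* (X,d) a finite rank matrix factorisation of W over R (W acting via phi):
   d xi_j = sum_i D i j xi_i, d odd, d^2 = W. *)
Definition is_mf (W : S) :=
  (forall i j, D i j != 0 -> p i != p j) /\
  (forall i k, \sum_j D i j * D j k = (if i == k then phi W else 0)).

Definition null_homotopic (c : R) :=
  exists L : I -> I -> R,
    (forall i j, L i j != 0 -> p i != p j) /\
    (forall i k, \sum_j (D i j * L j k + L i j * D j k)
                 = (if i == k then c else 0)).

Definition dXK (x : XKT R I n) : XKT R I n :=
  [ffun i => [ffun A => \sum_j D i j * x j A]].
Definition deltaXK (x : XKT R I n) : XKT R I n :=
  [ffun i => if p i then - kdelta (x i) else kdelta (x i)].
Definition DXK (x : XKT R I n) : XKT R I n := dXK x + deltaXK x.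
Definition hXK (h : KT R n -> KT R n) (x : XKT R I n) : XKT R I n :=
  [ffun i => if p i then - h (x i) else h (x i)].
Definition piXK (x : XKT R I n) : XQT Q I := [ffun i => piK (x i)].
Definition sigmaXQ (sigma : Q -> KT R n) (y : XQT Q I) : XKT R I n :=
  [ffun i => sigma (y i)].
Definition dXQ (y : XQT Q I) : XQT Q I :=
  [ffun i => \sum_j q (D i j) * y j].

Definition homXK (b : bool) (x : XKT R I n) :=
  forall i (A : {set 'I_n}), x i A != 0 -> p i (+) odd #|A| = b.
Definition homXQ (b : bool) (y : XQT Q I) :=
  forall i, y i != 0 -> p i = b.

Definition parXK_XK (c : bool) (f : XKT R I n -> XKT R I n) :=
  forall b x, homXK b x -> homXK (b (+) c) (f x).
Definition parXK_XQ (c : bool) (f : XKT R I n -> XQT Q I) :=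
  forall b x, homXK b x -> homXQ (b (+) c) (f x).
Definition parXQ_XK (c : bool) (f : XQT Q I -> XKT R I n) :=
  forall b y, homXQ b y -> homXK (b (+) c) (f y).
Definition parXQ_XQ (c : bool) (f : XQT Q I -> XQT Q I) :=
  forall b y, homXQ b y -> homXQ (b (+) c) (f y).

Definition pi_homotopy_equivalence :=
  [/\ slin scaleXK scaleXQ piXK, parXK_XQ false piXK,
      (forall x, piXK (DXK x) = dXQ (piXK x)) &
      exists g : XQT Q I -> XKT R I n,
        [/\ slin scaleXQ scaleXK g, parXQ_XK false g,
            (forall y, DXK (g y) = g (dXQ y)),
            (exists H1 : XKT R I n -> XKT R I n,
               [/\ slin scaleXK scaleXK H1, parXK_XK true H1 &
                   forall x, g (piXK x) = x + DXK (H1 x) + H1 (DXK x)]) &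
            (exists H2 : XQT Q I -> XQT Q I,
               [/\ slin scaleXQ scaleXQ H2, parXQ_XQ true H2 &
                   forall y, piXK (g y) = y + dXQ (H2 y) + H2 (dXQ y)])]].

(* sigma_oo = sum_{m >= 0} (h d)^m sigma, h_oo = sum_{m >= 0} (h d)^m h;
   the terms with m > n vanish since h d raises the exterior degree. *)
Definition sigma_inf (h : KT R n -> KT R n) (sigma : Q -> KT R n)
  (y : XQT Q I) : XKT R I n :=
  \sum_(m < n.+1) iter m (fun z => hXK h (dXK z)) (sigmaXQ sigma y).
Definition h_inf (h : KT R n -> KT R n) (x : XKT R I n) : XKT R I n :=
  \sum_(m < n.+1) iter m (fun z => hXK h (dXK z)) (hXK h x).

End Defs.

(* Main.v *)
Require Import Defs.
From HB Require Import structures.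
From mathcomp Require Import all_boot all_order all_algebra.
Import Order.TTheory GRing.Theory Num.Theory.
Set Implicit Arguments. Unset Strict Implicit. Unset Printing Implicit Defensive.
Local Open Scope ring_scope.

Module PertM.
Section Pert.
Variables (M N : zmodType) (k : nat).
Variables (d dl H Wm : M -> M) (Sg : N -> M) (P : M -> N) (dQ : N -> N).
Hypotheses (dD : {morph d : x y / x + y}) (dlD : {morph dl : x y / x + y})
  (HD : {morph H : x y / x + y}) (WmD : {morph Wm : x y / x + y})
  (SgD : {morph Sg : x y / x + y}) (PD : {morph P : x y / x + y})
  (dQD : {morph dQ : x y / x + y}).
Hypotheses (dd : forall a, d (d a) = Wm a) (HW : forall a, H (Wm a) = Wm (H a))
  (anti : forall a, d (dl a) = - dl (d a))
  (hom : forall z, H (dl z) = Sg (P z) - z - dl (H z))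
  (HH : forall z, H (H z) = 0) (HSg : forall y, H (Sg y) = 0)
  (PH : forall z, P (H z) = 0) (dlSg : forall y, dl (Sg y) = 0)
  (PSg : forall y, P (Sg y) = y) (Pd : forall a, P (d a) = dQ (P a)).

Lemma add0 (A B : zmodType) (f : A -> B) : {morph f : x y / x + y} -> f 0 = 0.
Proof. move=> fD; have h := fD 0 0; rewrite addr0 in h. by apply: (addrI (f 0)); rewrite -h addr0. Qed.
Lemma addN (A B : zmodType) (f : A -> B) : {morph f : x y / x + y} -> {morph f : x / - x}.
Proof. move=> fD x /=; apply: (addrI (f x)); by rewrite -fD !subrr (add0 fD). Qed.
Lemma addB (A B : zmodType) (f : A -> B) : {morph f : x y / x + y} -> {morph f : x y / x - y}.
Proof. by move=> fD x y; rewrite fD (addN fD). Qed.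
Lemma addS (A B : zmodType) (f : A -> B) (J : finType) (F : J -> A) :
  {morph f : x y / x + y} -> f (\sum_j F j) = \sum_j f (F j).
Proof. by move=> fD; rewrite (big_morph f fD (add0 fD)). Qed.

Definition Nop x := H (d x).
Lemma NopD : {morph Nop : x y / x + y}.
Proof. by move=> x y; rewrite /Nop dD HD. Qed.
Lemma iterD m : {morph iter m Nop : x y / x + y}.
Proof. elim: m => [//|m IH] x y /=; by rewrite IH NopD. Qed.

Definition T x := \sum_(m < k.+1) iter m Nop x.
Hypothesis nilp : forall x, iter k.+1 Nop x = 0.

Lemma TD : {morph T : x y / x + y}.
Proof. by move=> x y; rewrite /T -big_split /=; apply: eq_bigr => i _; rewrite iterD. Qed.

Lemma T_left x : T x - Nop (T x) = x.
Proof.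
rewrite /T (addS _ NopD) big_ord_recl big_ord_recr /=.
have := nilp x => /= ->; rewrite addr0.
by under eq_bigr do rewrite add0n; rewrite addrK.
Qed.

Lemma T_right x : T (x - Nop x) = x.
Proof.
rewrite (addB TD) {2}/T (big_ord_recr) /=.
under [X in _ - (X + _)]eq_bigr do rewrite -iterSr.
rewrite -iterSr nilp addr0 /T big_ord_recl /=.
by under eq_bigr do rewrite add0n; rewrite addrK.
Qed.

Lemma inj1N a b : a - Nop a = b - Nop b -> a = b.
Proof. by move=> e; rewrite -(T_right a) -(T_right b) e. Qed.

Lemma HT z : H (T z) = H z.
Proof.
rewrite /T (addS _ HD) big_ord_recl /= big1 ?addr0 // => i _.
by rewrite /Nop HH.
Qed.

Lemma PT z : P (T z) = P z.
Proof.
rewrite /T (addS _ PD) big_ord_recl /= big1 ?addr0 // => i _.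
by rewrite /Nop PH.
Qed.

Lemma star a : (d a + dl a) - Nop (d a + dl a)
  = dl (a - Nop a) - Wm (H a) + Sg (dQ (P a)).
Proof.
rewrite /Nop dD dd HD HW anti (addN HD) hom Pd (addB dlD).
rewrite !opprD !opprK.
set A := d a; set B := dl a; set C := Wm (H a); set E := Sg (dQ (P a));
set F := dl (H (d a)).
rewrite !addrA [A + B]addrC (addrAC B A) (addrAC (B - C) A) addrK.
by rewrite (addrAC B (-F)) (addrAC (B - C) (-F)).
Qed.

Lemma pert_morph y : d (T (Sg y)) + dl (T (Sg y)) = T (Sg (dQ y)).
Proof.
apply: inj1N; rewrite T_left star T_left dlSg HT HSg (add0 WmD) PT PSg.
by rewrite subr0 add0r.
Qed.

Lemma pert_P y : P (T (Sg y)) = y.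
Proof. by rewrite PT PSg. Qed.

Lemma pert_retract x :
  T (Sg (P x)) = x + (d (T (H x)) + dl (T (H x))) + T (H (d x + dl x)).
Proof.
apply: inj1N; rewrite T_left.
have E : forall u v w : M, (u + v + w) - Nop (u + v + w)
    = (u - Nop u) + (v - Nop v) + (w - Nop w).
  move=> u v w; rewrite !NopD !opprD (addrACA (u + v)) (addrACA u) //.
rewrite E star T_left T_left HT HH (add0 WmD) PT PH (add0 dQD) (add0 SgD) subr0 addr0.
rewrite HD hom /Nop.
set A := H (d x); set B := dl (H x); set C := Sg (P x).
by rewrite addrA (addrAC x (-A) B) subrK -(addrA C) -opprD addrC subrK.
Qed.

End Pert.

End PertM.
Import PertM.

Section Conc.
Variables (S R Q : comPzRingType) (phi : {rmorphism S -> R}) (W : S)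
  (I : finType) (p : I -> bool) (D : I -> I -> R)
  (n : nat) (t : 'I_n -> R) (q : {rmorphism R -> Q})
  (sigma : Q -> KT R n) (h : KT R n -> KT R n).
Hypotheses (Hmf : is_mf phi p D W)
  (Hsig : slin (scaleQ phi q) (scaleK (n:=n) phi) sigma)
  (Hh : slin (scaleK (n:=n) phi) (scaleK (n:=n) phi) h)
  (Hsig0 : forall a, deg_supp 0 (sigma a))
  (Hdsig : forall a, kdelta t (sigma a) = 0)
  (Hhdeg : forall k f, deg_supp k f -> deg_supp k.+1 (h f))
  (HPsig : forall a, piK q (sigma a) = a)
  (Hsp : forall f, sigma (piK q f) = f + kdelta t (h f) + h (kdelta t f))
  (Hhh : forall f, h (h f) = 0)
  (Hhs : forall a, h (sigma a) = 0)
  (Hph : forall f, piK q (h f) = 0).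

Lemma scaleK1 (f : KT R n) : scaleK phi 1 f = f.
Proof. by apply/ffunP => A; rewrite ffunE rmorph1 mul1r. Qed.

Lemma hD : {morph h : x y / x + y}.
Proof. by move=> x y; rewrite -{1}(scaleK1 x) Hh scaleK1. Qed.

Lemma sigD : {morph sigma : x y / x + y}.
Proof.
move=> x y; have -> : x = scaleQ phi q 1 x by rewrite /scaleQ rmorph1 rmorph1 mul1r.
by rewrite Hsig scaleK1 /scaleQ !rmorph1 mul1r.
Qed.

Lemma hZ s f : h (scaleK phi s f) = scaleK phi s (h f).
Proof. by rewrite -[scaleK _ _ f]addr0 Hh (add0 hD) addr0. Qed.

Lemma kdeltaD : {morph kdelta t : x y / x + y}.
Proof.
move=> x y; apply/ffunP => B; rewrite !ffunE -big_split /=.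
by apply: eq_bigr => a _; rewrite ffunE mulrDr.
Qed.

Lemma kdelta_comb (c : I -> R) (x : I -> KT R n) :
  kdelta t [ffun A => \sum_j c j * x j A]
  = [ffun B => \sum_j c j * kdelta t (x j) B].
Proof.
apply/ffunP => B; rewrite !ffunE.
under [RHS]eq_bigr do rewrite ffunE big_distrr.
rewrite exchange_big /=; apply: eq_bigr => a _.
rewrite ffunE big_distrr /=; apply: eq_bigr => j _.
by rewrite mulrCA.
Qed.

Lemma sgnF (A B : zmodType) (F : A -> B) (b : bool) x :
  {morph F : x y / x + y} -> F (if b then - x else x) = if b then - F x else F x.
Proof. by move=> FD; case: b => //; rewrite (addN FD). Qed.

Local Notation M := {ffun I -> {ffun {set 'I_n} -> R}}.
Local Notation NQ := {ffun I -> Q}.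

Definition dd : M -> M := dXK D.
Definition dl : M -> M := deltaXK t p.
Definition HH : M -> M := hXK p h.
Definition Wm : M -> M := scaleXK phi W.
Definition Sg : NQ -> M := sigmaXQ sigma.
Definition PP : M -> NQ := @piXK _ _ q n I.
Definition dQ : NQ -> NQ := dXQ q D.

Lemma ddD : {morph dd : x y / x + y}.
Proof.
move=> x y; apply/ffunP => i; apply/ffunP => A; rewrite !ffunE -big_split /=.
by apply: eq_bigr => j _; rewrite !ffunE mulrDr.
Qed.

Lemma dlD : {morph dl : x y / x + y}.
Proof.
move=> x y; apply/ffunP => i; rewrite !ffunE kdeltaD.
by case: (p i); rewrite ?opprD.
Qed.

Lemma HHD : {morph HH : x y / x + y}.
Proof.
move=> x y; apply/ffunP => i; rewrite !ffunE hD.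
by case: (p i); rewrite ?opprD.
Qed.

Lemma WmD : {morph Wm : x y / x + y}.
Proof.
move=> x y; apply/ffunP => i; apply/ffunP => A; by rewrite !ffunE mulrDr.
Qed.

Lemma SgD : {morph Sg : x y / x + y}.
Proof. by move=> x y; apply/ffunP => i; rewrite !ffunE sigD. Qed.

Lemma PPD : {morph PP : x y / x + y}.
Proof. by move=> x y; apply/ffunP => i; rewrite !ffunE /piK ffunE rmorphD. Qed.

Lemma dQD : {morph dQ : x y / x + y}.
Proof.
move=> x y; apply/ffunP => i; rewrite !ffunE -big_split /=.
by apply: eq_bigr => j _; rewrite !ffunE mulrDr.
Qed.

Lemma dd_dd a : dd (dd a) = Wm a.
Proof.
apply/ffunP => i; apply/ffunP => A; rewrite !ffunE.
under eq_bigr do rewrite !ffunE big_distrr.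
rewrite exchange_big /=.
under eq_bigr do rewrite /= -[\sum_(j0 : I) _]/(\sum_j0 D i j0 * (D j0 _ * a _ A)).
transitivity (\sum_j (\sum_j0 D i j0 * D j0 j) * a j A).
  apply: eq_bigr => j _; rewrite big_distrl; apply: eq_bigr => k _; by rewrite mulrA.
case: Hmf => _ Hm2.
rewrite (bigD1 i) //= Hm2 eqxx [X in _ + X]big1 ?addr0 // => j /negbTE ij.
by rewrite Hm2 eq_sym ij mul0r.
Qed.


Lemma scaleKN s (f : KT R n) : scaleK phi s (- f) = - scaleK phi s f.
Proof. by apply/ffunP => A; rewrite !ffunE mulrN. Qed.

Lemma kdeltaN : {morph kdelta t : x / - x}.
Proof. exact: addN kdeltaD. Qed.
Lemma hN : {morph h : x / - x}.
Proof. exact: addN hD. Qed.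

Lemma HW a : HH (Wm a) = Wm (HH a).
Proof.
apply/ffunP => i; rewrite /HH /Wm /hXK /scaleXK !ffunE.
by case: (p i); rewrite hZ ?scaleKN.
Qed.

Lemma anti a : dd (dl a) = - dl (dd a).
Proof.
apply/ffunP => i; apply/ffunP => A; rewrite /dd /dl /dXK /deltaXK !ffunE kdelta_comb.
case Hpi: (p i); rewrite ?ffunE ?opprK ?kdelta_comb ?ffunE -?sumrN; apply: eq_bigr => j _;
 rewrite !ffunE; (have [->|nz] := eqVneq (D i j) 0; first by rewrite !mul0r ?oppr0);
 have := Hmf.1 i j nz; rewrite Hpi; case: (p j) => //= _; by rewrite ?ffunE ?mulrN ?opprK.
Qed.

Lemma hom z : HH (dl z) = Sg (PP z) - z - dl (HH z).
Proof.
apply/ffunP => i; rewrite !ffunE.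
have E : forall (x a b : KT R n), b = x + a + b - x - a.
  by move=> x a b; rewrite (addrAC (x + a) b) (addrAC x a) subrr add0r addrAC subrr add0r.
by case: (p i); rewrite ?hN ?kdeltaN ?opprK Hsp; apply: E.
Qed.

Lemma HH_HH z : HH (HH z) = 0.
Proof. by apply/ffunP => i; rewrite !ffunE; case: (p i); rewrite ?hN Hhh ?oppr0. Qed.

Lemma HSg y : HH (Sg y) = 0.
Proof. by apply/ffunP => i; rewrite !ffunE; case: (p i); rewrite Hhs ?oppr0. Qed.

Lemma PH z : PP (HH z) = 0.
Proof.
apply/ffunP => i; rewrite !ffunE; have := Hph (z i); rewrite /piK => E.
by case: (p i); rewrite ?ffunE ?rmorphN E ?oppr0.
Qed.

Lemma dlSg y : dl (Sg y) = 0.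
Proof. by apply/ffunP => i; rewrite !ffunE; case: (p i); rewrite Hdsig ?oppr0. Qed.

Lemma PSg y : PP (Sg y) = y.
Proof. by apply/ffunP => i; rewrite !ffunE HPsig. Qed.

Lemma Pd a : PP (dd a) = dQ (PP a).
Proof.
apply/ffunP => i; rewrite !ffunE /piK ffunE rmorph_sum; apply: eq_bigr => j _.
by rewrite rmorphM !ffunE.
Qed.


Definition proj k (f : KT R n) : KT R n := [ffun A : {set 'I_n} => if #|A| == k then f A else 0].

Lemma cardA (A : {set 'I_n}) : (#|A| < n.+1)%N.
Proof. by rewrite ltnS (leq_trans (max_card _)) // card_ord. Qed.

Lemma decomp (f : KT R n) : f = \sum_(k < n.+1) proj k f.
Proof.
apply/ffunP => A; rewrite sum_ffunE; under eq_bigr do rewrite ffunE.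
rewrite -big_mkcond /= (big_pred1 (Ordinal (cardA A))) // => k /=.
by rewrite eq_sym -(inj_eq val_inj).
Qed.

Lemma h_decomp (f : KT R n) : h f = \sum_(k < n.+1) h (proj k f).
Proof. by rewrite {1}(decomp f) (addS _ hD). Qed.

Lemma proj_deg k (f : KT R n) : deg_supp k (proj k f).
Proof. by move=> A /negbTE nA; rewrite ffunE nA. Qed.

Lemma h_low k (f : KT R n) : (forall A : {set 'I_n}, (#|A| < k)%N -> f A = 0) ->
  forall A : {set 'I_n}, (#|A| < k.+1)%N -> h f A = 0.
Proof.
move=> Hf A HA; rewrite h_decomp sum_ffunE big1 // => j _.
case: (ltnP j k) => jk.
  have -> : proj j f = 0.
    by apply/ffunP => B; rewrite !ffunE; case: eqP => // e; apply: Hf; rewrite e.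
  by rewrite (add0 hD) ffunE.
rewrite (Hhdeg (@proj_deg j f)) //; rewrite neq_ltn; apply/orP; left.
by apply: leq_trans HA _.
Qed.

Lemma h_par b (f : KT R n) : (forall A : {set 'I_n}, f A != 0 -> odd #|A| = b) ->
  forall A : {set 'I_n}, h f A != 0 -> odd #|A| = ~~ b.
Proof.
move=> Hf A nz; case E: (odd #|A| == ~~ b); first by apply/eqP.
exfalso; move/negP: nz; apply; apply/eqP.
rewrite h_decomp sum_ffunE big1 // => j _.
case: (boolP (odd j == b)) => oj.
  apply: (Hhdeg (@proj_deg j f)); apply/eqP => e.
  by move: E; rewrite e /= (eqP oj) eqxx.
have -> : proj j f = 0.
  apply/ffunP => B; rewrite !ffunE; case: eqP => // e.
  case: (eqVneq (f B) 0) => // /Hf; rewrite e => ob.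
  by move: oj; rewrite ob eqxx.
by rewrite (add0 hD) ffunE.
Qed.

Definition lowsupp k (x : M) := forall i (A : {set 'I_n}), (#|A| < k)%N -> x i A = 0.

Lemma Nop_low k (x : M) : lowsupp k x -> lowsupp k.+1 (Nop dd HH x).
Proof.
move=> Hx i A HA; rewrite /Nop /HH /hXK ffunE.
case: (p i); rewrite ?ffunE; [apply/eqP; rewrite oppr_eq0; apply/eqP|];
  (apply: h_low HA => B HB; rewrite /dd /dXK !ffunE big1 // => j _;
   by rewrite Hx // mulr0).
Qed.

Lemma nilp (x : M) : iter n.+1 (Nop dd HH) x = 0.
Proof.
have L : forall m, lowsupp m (iter m (Nop dd HH) x).
  by elim => [|m IH] //=; apply: Nop_low.
by apply/ffunP => i; apply/ffunP => A; rewrite L ?cardA // !ffunE.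
Qed.


Lemma main_morph y : DXK t p D (sigma_inf p D h sigma y) = sigma_inf p D h sigma (dXQ q D y).
Proof. exact: (pert_morph ddD dlD HHD WmD PPD dd_dd HW anti hom HH_HH HSg PH dlSg PSg Pd nilp y). Qed.

Lemma main_P y : piXK q (sigma_inf p D h sigma y) = y.
Proof. exact: (pert_P n dd PPD PH PSg y). Qed.

Lemma main_retract x : sigma_inf p D h sigma (piXK q x)
   = x + DXK t p D (h_inf p D h x) + h_inf p D h (DXK t p D x).
Proof. exact: (pert_retract ddD dlD HHD WmD SgD PPD dQD dd_dd HW anti hom HH_HH PH Pd nilp x). Qed.


Section SlinGen.
Variables (U V Z : zmodType) (aU : S -> U -> U) (aV : S -> V -> V) (aZ : S -> Z -> Z).
Lemma slin_comp (f : U -> V) (g : V -> Z) :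
  slin aU aV f -> slin aV aZ g -> slin aU aZ (fun x => g (f x)).
Proof. by move=> Hf Hg s x y; rewrite Hf Hg. Qed.
Lemma slin_iter (f : U -> U) m : slin aU aU f -> slin aU aU (iter m f).
Proof. by move=> Hf; elim: m => [//|m IH] s x y /=; rewrite IH Hf. Qed.
Lemma slin_sum k (F : 'I_k -> U -> V) :
  (forall s, {morph aV s : u v / u + v}) ->
  (forall i, slin aU aV (F i)) -> slin aU aV (fun x => \sum_(i < k) F i x).
Proof.
move=> aD HF s x y; rewrite (big_morph (aV s) (aD s) (add0 (aD s))) -big_split /=.
by apply: eq_bigr => i _; rewrite HF.
Qed.
End SlinGen.

Lemma scaleXKD s : {morph scaleXK phi (n:=n) (I:=I) s : u v / u + v}.
Proof. by move=> u v; apply/ffunP => i; apply/ffunP => A; rewrite !ffunE mulrDr. Qed.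

Lemma dd_slin : slin (scaleXK (I:=I) (n:=n) phi) (scaleXK (I:=I) (n:=n) phi) dd.
Proof.
move=> s x y; apply/ffunP => i; apply/ffunP => A; rewrite !ffunE mulr_sumr -big_split /=.
by apply: eq_bigr => j _; rewrite !ffunE mulrDr mulrCA.
Qed.

Lemma HH_slin : slin (scaleXK (I:=I) (n:=n) phi) (scaleXK (I:=I) (n:=n) phi) HH.
Proof.
move=> s x y; apply/ffunP => i; rewrite !ffunE.
by case: (p i); rewrite Hh // opprD scaleKN.
Qed.

Lemma Sg_slin : slin (scaleXQ (I:=I) phi q) (scaleXK (I:=I) (n:=n) phi) Sg.
Proof. by move=> s x y; apply/ffunP => i; rewrite !ffunE Hsig. Qed.

Lemma PP_slin : slin (scaleXK (I:=I) (n:=n) phi) (scaleXQ (I:=I) phi q) PP.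
Proof.
by move=> s x y; apply/ffunP => i; rewrite !ffunE /piK !ffunE rmorphD rmorphM.
Qed.

Lemma T_slin : slin (scaleXK (I:=I) (n:=n) phi) (scaleXK (I:=I) (n:=n) phi) (T n dd HH).
Proof.
apply: slin_sum => [s|i]; first exact: scaleXKD.
apply: slin_iter; exact: slin_comp dd_slin HH_slin.
Qed.

Lemma sigma_inf_slin : slin (scaleXQ (I:=I) phi q) (scaleXK (I:=I) (n:=n) phi)
  (sigma_inf p D h sigma).
Proof. exact: slin_comp Sg_slin T_slin. Qed.

Lemma h_inf_slin : slin (scaleXK (I:=I) (n:=n) phi) (scaleXK (I:=I) (n:=n) phi)
  (h_inf p D h).
Proof. exact: slin_comp HH_slin T_slin. Qed.

Lemma homXK0 b : homXK p b (0 : M).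
Proof. by move=> i A; rewrite !ffunE eqxx. Qed.

Lemma homXKD b (x y : M) : homXK p b x -> homXK p b y -> homXK p b (x + y).
Proof.
move=> Hx Hy i A; rewrite !ffunE => nz.
case: (eqVneq (x i A) 0) => [e|]; last exact: Hx.
by apply: Hy; move: nz; rewrite e add0r.
Qed.

Lemma homXK_sum b k (F : 'I_k -> M) : (forall j, homXK p b (F j)) -> homXK p b (\sum_j F j).
Proof. by move=> HF; apply: (big_ind (homXK p b)) => //; [exact: homXK0|exact: homXKD]. Qed.

Lemma dd_par b x : homXK p b x -> homXK p (~~ b) (dd x).
Proof.
move=> Hx i A; rewrite /dd /dXK !ffunE => nz.
case: (pickP (fun j => D i j * x j A != 0)) => [j /= nzj|none]; last first.
  by move: nz; rewrite big1 ?eqxx // => j _; move: (none j) => /= /negbFE /eqP.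
have nD : D i j != 0 by apply: contraNneq nzj => ->; rewrite mul0r.
have nx : x j A != 0 by apply: contraNneq nzj => ->; rewrite mulr0.
have := Hmf.1 i j nD; have := Hx j A nx; clear Hx.
by case: (p i); case: (p j); case: (odd _); case: b.
Qed.

Lemma HH_par b x : homXK p b x -> homXK p (~~ b) (HH x).
Proof.
move=> Hx i A; rewrite /HH /hXK !ffunE => nz.
have nz' : h (x i) A != 0 by move: nz; case: (p i); rewrite ?ffunE ?oppr_eq0.
have Hb : forall B, x i B != 0 -> odd #|B| = b (+) p i.
  by move=> B /(Hx i B) <-; case: (p i); case: (odd _).
have := h_par Hb nz'; clear Hx Hb.
by case: (p i); case: (odd _); case: b.
Qed.

Lemma iter_par b m x : homXK p b x -> homXK p b (iter m (Nop dd HH) x).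
Proof.
move=> Hx; elim: m => [//|m IH] /=.
by rewrite -[b]negbK; apply: HH_par; apply: dd_par.
Qed.

Lemma T_par b x : homXK p b x -> homXK p b (T n dd HH x).
Proof. by move=> Hx; apply: homXK_sum => j; apply: iter_par. Qed.

Lemma sigma_inf_par : parXQ_XK p false (sigma_inf p D h sigma).
Proof.
move=> b y Hy; rewrite addbF; apply: T_par => i A; rewrite /Sg /sigmaXQ !ffunE => nz.
have A0 : #|A| = 0%N by apply/eqP; apply: contraNT nz => /Hsig0 ->.
case: (eqVneq (y i) 0) => [e|]; last by move/Hy => ->; rewrite A0 addbF.
by move: nz; rewrite e (add0 sigD) ffunE eqxx.
Qed.

Lemma h_inf_par : parXK_XK p true (h_inf p D h).
Proof. by move=> b x Hx; rewrite addbT; apply: T_par; apply: HH_par. Qed.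

Lemma PP_par : parXK_XQ p false (@piXK _ _ q n I).
Proof.
move=> b x Hx i; rewrite !ffunE /piK addbF => nz.
have : x i set0 != 0 by apply: contraNneq nz => ->; rewrite rmorph0.
by move/Hx; rewrite cards0 addbF.
Qed.


Lemma PP_D (qt : forall a, q (t a) = 0) x :
  piXK q (DXK t p D x) = dXQ q D (piXK q x).
Proof.
change (PP (dd x + dl x) = dQ (PP x)); rewrite PPD Pd.
have -> : PP (dl x) = 0; last by rewrite addr0.
apply/ffunP => i; rewrite /PP /dl /piXK /deltaXK !ffunE /piK.
case: (p i); rewrite /kdelta ?ffunE ?rmorphN ?ffunE rmorph_sum big1 ?oppr0 // => a _;
  by rewrite !rmorphM qt mulr0 mul0r.
Qed.

Lemma main (Hq : is_quotient_by_t q t) :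
  pi_homotopy_equivalence phi q t p D /\
  [/\ slin (scaleXQ (I:=I) phi q) (scaleXK (I:=I) (n:=n) phi) (sigma_inf p D h sigma),
      parXQ_XK p false (sigma_inf p D h sigma),
      (forall y, DXK t p D (sigma_inf p D h sigma y)
                 = sigma_inf p D h sigma (dXQ q D y)),
      (forall y, piXK q (sigma_inf p D h sigma y) = y) &
      (forall x, sigma_inf p D h sigma (piXK q x)
                 = x + DXK t p D (h_inf p D h x) + h_inf p D h (DXK t p D x))].
Proof.
have qt : forall a, q (t a) = 0.
  move=> a; apply/(proj2 Hq (t a)).2; exists (fun j => (j == a)%:R).
  rewrite (bigD1 a) //= eqxx mul1r big1 ?addr0 // => j /negbTE ->; by rewrite mul0r.
split; last first.
  split; [exact: sigma_inf_slin|exact: sigma_inf_par|exact: main_morph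
         |exact: main_P|exact: main_retract].
split; [exact: PP_slin|exact: PP_par|exact: PP_D|].
exists (sigma_inf p D h sigma); split.
- exact: sigma_inf_slin.
- exact: sigma_inf_par.
- exact: main_morph.
- exists (h_inf p D h); split; [exact: h_inf_slin|exact: h_inf_par|exact: main_retract].
- exists (fun _ => 0); split.
  + move=> s x y; rewrite addr0; apply/ffunP => i; by rewrite !ffunE /scaleQ mulr0.
  + by move=> b y _ i; rewrite ffunE eqxx.
  + move=> y; rewrite main_P addr0.
    have -> : dXQ q D 0 = 0 by apply/ffunP => i; rewrite !ffunE big1 // => j _; rewrite ffunE mulr0.
    by rewrite addr0.
Qed.

End Conc.



Theorem proposition7p1
  (S R Q : comPzRingType) (phi : {rmorphism S -> R}) (W : S)
  (I : finType) (p : I -> bool) (D : I -> I -> R)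
  (n : nat) (t : 'I_n -> R) (q : {rmorphism R -> Q})
  (sigma : Q -> KT R n) (h : KT R n -> KT R n) :
  is_quotient_by_t q t ->
  is_mf phi p D W ->
  quasi_regular t ->
  (forall j : 'I_n, null_homotopic p D (t j)) ->
  (* sigma, h are S-linear *)
  slin (scaleQ phi q) (scaleK (n:=n) phi) sigma ->
  slin (scaleK (n:=n) phi) (scaleK (n:=n) phi) h ->
  (* sigma : R/tR -> K(t) is a morphism of complexes (lands in degree 0) *)
  (forall a, deg_supp 0 (sigma a)) ->
  (forall a, kdelta t (sigma a) = 0) ->
  (* h has degree -1 *)
  (forall k f, deg_supp k f -> deg_supp k.+1 (h f)) ->
  (forall a, piK q (sigma a) = a) ->
  (forall f, sigma (piK q f) = f + kdelta t (h f) + h (kdelta t f)) ->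
  (forall f, h (h f) = 0) ->
  (forall a, h (sigma a) = 0) ->
  (forall f, piK q (h f) = 0) ->
  pi_homotopy_equivalence phi q t p D /\
  [/\ slin (scaleXQ (I:=I) phi q) (scaleXK (I:=I) (n:=n) phi) (sigma_inf p D h sigma),
      parXQ_XK p false (sigma_inf p D h sigma),
      (forall y, DXK t p D (sigma_inf p D h sigma y)
                 = sigma_inf p D h sigma (dXQ q D y)),
      (forall y, piXK q (sigma_inf p D h sigma y) = y) &
      (forall x, sigma_inf p D h sigma (piXK q x)
                 = x + DXK t p D (h_inf p D h x) + h_inf p D h (DXK t p D x))].
Proof.
move=> Hq Hmf _ _ Hsig Hh Hsig0 Hdsig Hhdeg HPsig Hsp Hhh Hhs Hph.
exact: (main Hmf Hsig Hh Hsig0 Hdsig Hhdeg HPsig Hsp Hhh Hhs Hph Hq).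
Qed.
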